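(* Let $G$ be a group acting geometrically on a systolic complex $X$ and let $h\in G$ be a hyperbolic isometry. Let $K\ge L(h)$ be an integer. Then there exists $C>0$ such that for all integers $K'$ with $L(h)\le K'\le K$ we have $\mathrm{Disp}_K(h)\subset B_C(\mathrm{Disp}_{K'}(h),X)$.
   Context: $X$ is a systolic complex (simply connected simplicial complex with flag, $6$-large vertex links, where $6$-large means every embedded cycle of length $4$ or $5$ has a diagonal), with the combinatorial metric $d$ on vertices. The action is geometric: by simplicial automorphisms, with finite vertex stabilisers, and cocompact. An isometry (simplicial automorphism) $h$ is hyperbolic if it fixes no simplex of $X$. $L(h)=\min_x d(x,h x)$ over vertices $x$ (the translation length). For an integer $K\ge L(h)$, $\mathrm{Disp}_K(h)$ is the subcomplex spanned by all vertices $x$ with $d(x,hx)\le K$. For a subcomplex $A$, $B_C(A,X)$ is the union over vertices $v\in A$ of the balls $B_C(v,X)$, where $B_C(v,X)$ is the subcomplex spanned by vertices at distance $\le C$ from $v$. *)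

(* Defs.v *)
(* A flag simplicial complex X is represented by its 1-skeleton:
   a vertex type V with a symmetric irreflexive adjacency relation; the
   simplices of X are exactly the nonempty finite cliques (flagness). *)
From Stdlib Require Import List Arith Relations.
Import ListNotations.
Set Implicit Arguments.

Section Defs.
Variable V : Type.
Variable adj : V -> V -> Prop.

Definition graph_ok : Prop :=
  (forall x, ~ adj x x) /\ (forall x y, adj x y -> adj y x).

Definition is_simplex (s : list V) : Prop :=
  s <> [] /\ forall x y, In x s -> In y s -> x <> y -> adj x y.

Definition same_set (s t : list V) : Prop := forall x, In x s <-> In x t.

Inductive walk : V -> V -> nat -> Prop :=
| walk_nil x : walk x x 0
| walk_cons x z y n : adj x z -> walk z y n -> walk x y (S n).

Definition dist_le (x y : V) (n : nat) : Prop := exists m, m <= n /\ walk x y m.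

Definition connected : Prop := inhabited V /\ forall x y, exists n, walk x y n.

Definition simp (x y : V) : Prop := x = y \/ adj x y.

Fixpoint edge_path (l : list V) : Prop :=
  match l with
  | x :: ((y :: _) as t) => simp x y /\ edge_path t
  | _ => True
  end.

Inductive elem_move : list V -> list V -> Prop :=
| em_tri l1 l2 x y z : simp x y -> simp y z -> simp x z ->
    elem_move (l1 ++ x :: y :: z :: l2) (l1 ++ x :: z :: l2)
| em_dup l1 l2 x : elem_move (l1 ++ x :: x :: l2) (l1 ++ x :: l2).

Definition homotopic : list V -> list V -> Prop := clos_refl_sym_trans _ elem_move.

Definition simply_connected : Prop :=
  connected /\
  forall x l, edge_path (x :: l) -> last (x :: l) x = x -> homotopic (x :: l) [x].

(* the link of v (a full subcomplex on the neighbours of v, by flagness) is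
   6-large: every embedded cycle of length 4 or 5 in it has a diagonal *)
Definition link_6large (v : V) : Prop :=
  forall (n : nat) (c : nat -> V),
    (n = 4 \/ n = 5) ->
    (forall i, i < n -> adj v (c i)) ->
    (forall i j, i < n -> j < n -> c i = c j -> i = j) ->
    (forall i, i < n -> adj (c i) (c (S i mod n))) ->
    exists i j, i < n /\ j < n /\ j <> i /\ j <> S i mod n /\ i <> S j mod n /\
                adj (c i) (c j).

Definition systolic : Prop :=
  graph_ok /\ simply_connected /\ forall v, link_6large v.

Definition transl_length (f : V -> V) (L : nat) : Prop :=
  (exists x, dist_le x (f x) L) /\ forall x n, dist_le x (f x) n -> L <= n.

Definition in_Disp (f : V -> V) (K : nat) (x : V) : Prop := dist_le x (f x) K.

(* Disp_K(f) ⊂ B_C(Disp_K'(f), X) as subcomplexes: every simplex of the full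
   subcomplex Disp_K(f) lies in some ball B_C(v, X) with v a vertex of Disp_K'(f) *)
Definition Disp_in_ball (f : V -> V) (K K' C : nat) : Prop :=
  forall s, is_simplex s -> (forall x, In x s -> in_Disp f K x) ->
    exists v, in_Disp f K' v /\ forall x, In x s -> dist_le v x C.

Definition hyperbolic (f : V -> V) : Prop :=
  forall s, is_simplex s -> ~ same_set (map f s) s.
End Defs.

Definition is_group (G : Type) (mul : G -> G -> G) (one : G) (inv : G -> G) : Prop :=
  (forall a b c, mul a (mul b c) = mul (mul a b) c) /\
  (forall a, mul one a = a) /\ (forall a, mul a one = a) /\
  (forall a, mul (inv a) a = one) /\ (forall a, mul a (inv a) = one).

(* geometric action: by simplicial automorphisms, finite vertex stabilisers,
   cocompact (finitely many orbits of simplices) *)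
Definition geometric_action (G V : Type) (adj : V -> V -> Prop)
    (mul : G -> G -> G) (one : G) (act : G -> V -> V) : Prop :=
  (forall x, act one x = x) /\
  (forall g h x, act (mul g h) x = act g (act h x)) /\
  (forall g x y, adj x y <-> adj (act g x) (act g y)) /\
  (forall v, exists l : list G, forall g, act g v = v -> In g l) /\
  (exists reps : list (list V), forall s, is_simplex adj s ->
      exists r g, In r reps /\ same_set s (map (act g) r)).

(* Main.v *)
Require Import Defs.
From Stdlib Require Import List Arith Lia Classical.
Import ListNotations.

Lemma union_fin (A B : Type) (N : list A) (Q : A -> B -> Prop) :
  (forall a, In a N -> exists l, forall b, Q a b -> In b l) ->
  exists l, forall a b, In a N -> Q a b -> In b l.
Proof.
  induction N as [|a N IH]; intros H.
  - exists []. intros a b [].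
  - destruct (H a (or_introl eq_refl)) as [l1 H1].
    destruct IH as [l2 H2]. { intros; apply H; now right. }
    exists (l1 ++ l2). intros a' b [<-|Ha] Hq; apply in_or_app; auto.
    right; eauto.
Qed.

Lemma bound_fin (A : Type) (N : list A) (P : A -> nat -> Prop) :
  (forall a, In a N -> exists n, P a n) ->
  exists C, forall a, In a N -> exists n, n <= C /\ P a n.
Proof.
  induction N as [|a N IH]; intros H.
  - exists 0. intros a [].
  - destruct (H a (or_introl eq_refl)) as [n1 H1].
    destruct IH as [C H2]. { intros; apply H; now right. }
    exists (max n1 C). intros a' [<-|Ha].
    + exists n1; split; auto; lia.
    + destruct (H2 a' Ha) as [n [? ?]]. exists n; split; auto; lia.
Qed.

Lemma walk_map (V : Type) (adj : V -> V -> Prop) (f : V -> V) :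
  (forall a b, adj a b -> adj (f a) (f b)) ->
  forall a b n, walk adj a b n -> walk adj (f a) (f b) n.
Proof.
  intros Hf a b n W; induction W; econstructor; eauto.
Qed.

Lemma walk_snoc (V : Type) (adj : V -> V -> Prop) a b c n :
  walk adj a b n -> adj b c -> walk adj a c (S n).
Proof.
  intros W; induction W; intros Hbc.
  - econstructor; [exact Hbc| constructor].
  - econstructor; eauto.
Qed.

Lemma dist_le_map (V : Type) (adj : V -> V -> Prop) (f : V -> V) :
  (forall a b, adj a b -> adj (f a) (f b)) ->
  forall a b n, dist_le adj a b n -> dist_le adj (f a) (f b) n.
Proof.
  intros Hf a b n [m [Hm W]]; exists m; split; auto. now apply walk_map.
Qed.

Lemma dist_le_mono (V : Type) (adj : V -> V -> Prop) a b n n' :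
  n <= n' -> dist_le adj a b n -> dist_le adj a b n'.
Proof. intros H [m [Hm W]]; exists m; split; auto; lia. Qed.

Theorem lemma4p2 (V G : Type) (adj : V -> V -> Prop)
    (mul : G -> G -> G) (one : G) (inv : G -> G) (act : G -> V -> V)
    (Hgrp : is_group mul one inv)
    (Hsys : systolic adj)
    (Hgeo : geometric_action adj mul one act)
    (h : G) (Hh : hyperbolic adj (act h))
    (L K : nat) (HL : transl_length adj (act h) L) (HK : L <= K) :
  exists C : nat, 0 < C /\
    forall K' : nat, L <= K' -> K' <= K -> Disp_in_ball adj (act h) K K' C.
Proof.
  destruct Hgrp as [Hassoc [Hone_l [Hone_r [Hinv_l Hinv_r]]]].
  destruct Hgeo as [Hact1 [HactM [Hadj [Hstab [reps Hreps]]]]].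
  destruct Hsys as [[Hirr Hsym] [[[_ Hconn] _] _]].
  assert (Hadjf : forall g a b, adj a b -> adj (act g a) (act g b))
    by (intros g a b; apply Hadj).
  assert (HgK : forall g x, act g (act (inv g) x) = x).
  { intros g x. rewrite <- HactM, Hinv_r, Hact1. reflexivity. }
  assert (HKg : forall g x, act (inv g) (act g x) = x).
  { intros g x. rewrite <- HactM, Hinv_l, Hact1. reflexivity. }
  assert (Hcos : forall a v, exists l, forall g, act g a = v -> In g l).
  { intros a v. destruct (classic (exists k1, act k1 a = v)) as [[k1 Hk1]|Hn].
    - destruct (Hstab a) as [l Hl]. exists (map (mul k1) l).
      intros g Hg. replace g with (mul k1 (mul (inv k1) g)).
      + apply in_map, Hl. rewrite HactM, Hg, <- Hk1. apply HKg.
      + rewrite Hassoc, Hinv_r, Hone_l. reflexivity.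
    - exists []. intros g Hg. exfalso; eauto. }
  set (R := concat reps).
  assert (HinR : forall r a, In r reps -> In a r -> In a R).
  { intros r a Hr Ha. unfold R. apply in_concat; eauto. }
  assert (Hnb : forall v, exists l, forall w, adj v w -> In w l).
  { intros v.
    destruct (union_fin _ _ R (fun a g => act g a = v)) as [lg Hlg].
    { intros a _. apply Hcos. }
    exists (flat_map (fun g => map (act g) R) lg).
    intros w Hvw.
    assert (Hs : is_simplex adj [v; w]).
    { split; [discriminate|]. intros x y Hx Hy Hxy.
      destruct Hx as [<-|[<-|[]]]; destruct Hy as [<-|[<-|[]]];
        try (exfalso; now apply Hxy); auto. }
    destruct (Hreps _ Hs) as [r [g [Hr Hsame]]].
    pose proof (proj1 (Hsame v) (or_introl eq_refl)) as Hv.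
    apply in_map_iff in Hv. destruct Hv as [a [Ha Har]].
    pose proof (proj1 (Hsame w) (or_intror (or_introl eq_refl))) as Hw.
    apply in_map_iff in Hw. destruct Hw as [b [Hb Hbr]].
    apply in_flat_map. exists g. split.
    - apply (Hlg a); [eapply HinR; eauto| exact Ha].
    - rewrite <- Hb. apply in_map. eapply HinR; eauto. }
  assert (Hball : forall n x, exists l, forall y, dist_le adj x y n -> In y l).
  { induction n as [|n IH]; intros x.
    - exists [x]. intros y [m [Hm W]]. assert (m = 0) by lia; subst.
      inversion W; subst; now left.
    - destruct (Hnb x) as [N HN].
      destruct (union_fin _ _ N (fun z y => dist_le adj z y n)) as [l Hl].
      { intros z _. apply IH. }
      exists (x :: l). intros y [m [Hm W]]. inversion W; subst.
      + now left.
      + right. eapply Hl; [apply HN; eassumption|]. exists n0; split; auto; lia. }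
  assert (Hkf : forall x0, exists l, forall k, dist_le adj x0 (act k x0) K -> In k l).
  { intros x0. destruct (Hball K x0) as [B HB].
    destruct (union_fin _ _ B (fun y k => act k x0 = y)) as [l Hl].
    { intros y _. apply Hcos. }
    exists l. intros k Hk. eapply Hl; [apply HB; exact Hk| reflexivity]. }
  destruct (union_fin _ _ R (fun x0 k => dist_le adj x0 (act k x0) K)) as [KS HKS].
  { intros x0 _. apply Hkf. }
  destruct (bound_fin _ (list_prod R KS)
     (fun p n => (exists y0, dist_le adj y0 (act (snd p) y0) L) ->
        exists y0, dist_le adj y0 (act (snd p) y0) L /\ dist_le adj y0 (fst p) n))
    as [C0 HC0].
  { intros [x0 k] _. simpl.
    destruct (classic (exists y0, dist_le adj y0 (act k y0) L)) as [[y0 Hy0]|Hn].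
    - destruct (Hconn y0 x0) as [n Hn]. exists n. intros _. exists y0. split; auto.
      exists n; split; auto.
    - exists 0. intros H; exfalso; auto. }
  exists (S C0). split; [lia|].
  intros K' HLK' HK'K s Hs HsD.
  destruct s as [|x s']; [destruct Hs as [Hne _]; now exfalso|].
  set (s := x :: s') in *.
  assert (Hx : is_simplex adj [x]).
  { split; [discriminate|]. intros a b [<-|[]] [<-|[]] H; now exfalso. }
  destruct (Hreps _ Hx) as [r [g [Hr Hsame]]].
  pose proof (proj1 (Hsame x) (or_introl eq_refl)) as Hxr.
  apply in_map_iff in Hxr. destruct Hxr as [x0 [Hgx0 Hx0r]].
  assert (Hx0R : In x0 R) by (eapply HinR; eauto).
  set (k := mul (inv g) (mul h g)).
  assert (Hk : forall y, act k y = act (inv g) (act h (act g y))).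
  { intros y. unfold k. rewrite !HactM. reflexivity. }
  assert (HkK : dist_le adj x0 (act k x0) K).
  { rewrite Hk, Hgx0. replace x0 with (act (inv g) x) by (rewrite <- Hgx0; apply HKg).
    apply dist_le_map; auto. apply HsD. now left. }
  assert (HkKS : In k KS) by (eapply HKS; eauto).
  destruct (HC0 (x0, k)) as [n [Hn HP]]; [apply in_prod; auto|].
  simpl in HP.
  destruct HP as [y0 [Hy0 Hy0x0]].
  { destruct HL as [[z Hz] _]. exists (act (inv g) z).
    rewrite Hk, HgK. apply dist_le_map; auto. }
  exists (act g y0). split.
  - unfold in_Disp. apply dist_le_mono with L; auto.
    replace (act h (act g y0)) with (act g (act k y0)).
    + apply dist_le_map; auto.
    + rewrite Hk, HgK. reflexivity.
  - assert (Hvx : dist_le adj (act g y0) x n).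
    { rewrite <- Hgx0. apply dist_le_map; auto. }
    intros x' Hx'.
    destruct (classic (x' = x)) as [->|Hne].
    + eapply dist_le_mono; [|exact Hvx]. lia.
    + assert (adj x x') by (destruct Hs as [_ Hs]; apply Hs; auto; now left).
      destruct Hvx as [m [Hm W]]. exists (S m). split; [lia|].
      eapply walk_snoc; eauto.
Qed.
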